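(* Let $G$ be a group generated by a set $X$, let $H$ be a normal subgroup of $G$, and let $\bar G=G/H$ with generating set $\bar X$ the image of $X$. Then $$\mathrm{pw}(\bar G,\bar X)\le \mathrm{pw}(G,X)\le \mathrm{pw}(\bar G,\bar X)+\mathrm{pw}(H,X).$$
   Context: A palindrome in a group generated by a set $X$ is an element represented by a reduced word in $X^{\pm1}$ reading the same forwards and backwards; $l_{\mathcal P}(g)$ is the minimal number of palindromes (in $X^{\pm1}$) whose product is $g$; $\mathrm{pw}(G,X)=\sup_{g\in G}l_{\mathcal P}(g)$. For a subgroup $H\le G$, $\mathrm{pw}(H,X)=\sup_{h\in H} l_{\mathcal P}(h)$, where palindromes are taken in $G$ with respect to the alphabet $X^{\pm1}$. *)

(* Defs.v *)
From HB Require Import structures.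
From mathcomp Require Import all_boot ssralg monoid.
From mathcomp Require Import all_classical reals constructive_ereal ereal.
From mathcomp Require Import Rstruct.

Set Implicit Arguments.
Unset Strict Implicit.
Unset Printing Implicit Defensive.

Local Open Scope classical_set_scope.

Section Palindromes.
Variable G : groupType.
Local Open Scope group_scope.

(* A letter of the alphabet X^{+-1}: (x, false) stands for x, (x, true) for x^-1. *)
Definition letter := (G * bool)%type.

Definition letter_val (l : letter) : G := if l.2 then l.1^-1 else l.1.

Definition word_val (w : seq letter) : G := foldr (fun l acc => letter_val l * acc) 1 w.

Definition word_on (X : set G) (w : seq letter) : Prop := forall l, l \in w -> X l.1.

(* freely reduced: no two consecutive letters x^e x^{-e} *)
Definition reduced_word (w : seq letter) : bool :=
  sorted (fun a b : letter => ~~ ((a.1 == b.1) && (a.2 != b.2))) w.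

Definition generates (X : set G) : Prop :=
  forall g : G, exists w, word_on X w /\ word_val w = g.

Definition palindrome (X : set G) (g : G) : Prop :=
  exists w, [/\ word_on X w, reduced_word w, rev w = w & word_val w = g].

Definition prodl (s : seq G) : G := foldr (fun x acc => x * acc) 1 s.

(* l_P(g): minimal number of palindromes whose product is g (in \bar Rdefinitions.R,
   +oo if there is none) *)
Definition pal_length (X : set G) (g : G) : \bar Rdefinitions.R :=
  ereal_inf [set ((n%:R : Rdefinitions.R)%R)%:E | n in
     [set n : nat | exists ps : seq G,
        [/\ size ps = n, (forall p, p \in ps -> palindrome X p) & prodl ps = g]]].

(* pw(S, X) = sup_{h in S} l_P(h), palindromes taken in G w.r.t. X *)
Definition pal_width_on (X : set G) (S : set G) : \bar Rdefinitions.R :=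
  ereal_sup (pal_length X @` S).

Definition pal_width (X : set G) : \bar Rdefinitions.R := pal_width_on X setT.

Definition normal_subgroup (H : set G) : Prop :=
  [/\ H 1, (forall x y, H x -> H y -> H (x * y^-1))
    & (forall x g, H x -> H (g^-1 * x * g))].

End Palindromes.

(* Main.v *)
Require Import Defs.
From HB Require Import structures.
From mathcomp Require Import all_boot ssralg monoid.
From mathcomp Require Import all_classical reals constructive_ereal ereal.
From mathcomp Require Import Rstruct.
From mathcomp Require Import order ssrnum.

Module Helpers.
Import Order.TTheory GRing.Theory Num.Theory.
Local Open Scope classical_set_scope.
Set Implicit Arguments.
Unset Strict Implicit.

Section Words.
Variable Gg : groupType.
Local Open Scope group_scope.
Implicit Types (u w x y mid : seq (letter Gg)).

Definition rr (a b : letter Gg) := ~~ ((a.1 == b.1) && (a.2 != b.2)).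

Lemma rrC a b : rr a b = rr b a.
Proof. by case: a b => [a e] [b f]; rewrite /rr /= eq_sym; case: e; case: f. Qed.

Lemma rr_refl a : rr a a.
Proof. by case: a => a e; rewrite /rr /= !eqxx. Qed.

Lemma cancel_val a b : ~~ rr a b -> letter_val a * letter_val b = 1.
Proof.
case: a b => [a e] [b f]; rewrite /rr negbK /= => /andP[/eqP -> ef].
by case: e f ef => [] [] //= _; rewrite ?mulVg ?mulgV.
Qed.

Lemma wv_cat x y : word_val (x ++ y) = word_val x * word_val y.
Proof. by elim: x => [|a x IH] /=; rewrite ?mul1g // IH mulgA. Qed.

Lemma wv_cons a x : word_val (a :: x) = letter_val a * word_val x.
Proof. by []. Qed.

Lemma wv_rcons x a : word_val (rcons x a) = word_val x * letter_val a.
Proof. by rewrite -cats1 wv_cat /= mulg1. Qed.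

Lemma not_sorted_split u : ~~ sorted rr u ->
  exists x a b y, u = x ++ a :: b :: y /\ ~~ rr a b.
Proof.
elim: u => [|a t IH] //=; case: t IH => [|b t] IH //=.
case hab: (rr a b) => /=; last by move=> _; exists [::], a, b, t; rewrite hab.
move=> H0; have [x [c [d [y [E H]]]]] := IH H0.
by exists (a :: x), c, d, y; rewrite E.
Qed.

Lemma reduced_rev u : sorted rr u -> sorted rr (rev u).
Proof.
rewrite rev_sorted => H.
by apply: sub_sorted H => a b; rewrite rrC.
Qed.

Lemma reduced_cat x y : sorted rr x -> sorted rr y ->
  (forall a b, x != [::] -> y != [::] -> rr (last a x) (head b y)) ->
  sorted rr (x ++ y).
Proof.
case: x => [|a x] //= hx; case: y => [|b y] //= hy H; first by rewrite cats0.
rewrite cat_path hx /=.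
have := H a b isT isT; case: x hx {H} => [|c x] /= hx Hab.
  by rewrite Hab.
by rewrite Hab.
Qed.


Lemma hcancel s1 s2 a b : ~~ rr a b ->
  word_val (s1 ++ a :: b :: s2) = word_val (s1 ++ s2).
Proof. by move=> H; rewrite !wv_cat /= [letter_val a * _]mulgA cancel_val // mul1g. Qed.

Lemma pal_decomp n w : size w < n -> rev w = w ->
  exists u mid, size mid <= 1 /\ w = u ++ mid ++ rev u.
Proof.
elim: n w => // n IH [|a t] Hs Hr; first by exists [::], [::].
case/lastP: t Hs Hr => [|t' b] Hs Hr; first by exists [::], [:: a].
rewrite rev_cons rev_rcons /= in Hr.
case: Hr => Eb Hr; subst b; case: (rcons_inj Hr) => Er.
have Hs' : size t' < n by move: Hs; rewrite /= size_rcons ltnS => /ltnW.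
have [u [mid [Hm E]]] := IH t' Hs' Er.
exists (a :: u), mid; split => //.
by rewrite E rev_cons /= !rcons_cat.
Qed.

Variable Y : set Gg.

Lemma word_on_cat x y : word_on Y (x ++ y) <-> word_on Y x /\ word_on Y y.
Proof.
split.
  by move=> H; split=> l hl; apply: H; rewrite mem_cat hl ?orbT.
by move=> [Hx Hy] l; rewrite mem_cat => /orP[] ?; [apply: Hx|apply: Hy].
Qed.

Lemma word_on_rev x : word_on Y (rev x) <-> word_on Y x.
Proof. by split=> H l hl; apply: H; rewrite ?mem_rev in hl *. Qed.

Lemma word_on_cons a x : word_on Y (a :: x) <-> Y a.1 /\ word_on Y x.
Proof.
split.
  by move=> H; split; [apply: H; rewrite mem_head | move=> l hl; apply: H; rewrite in_cons hl orbT].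
by move=> [Ha Hx] l; rewrite in_cons => /orP[/eqP ->|] // /Hx.
Qed.

Lemma word_on_rcons x a : word_on Y (rcons x a) <-> Y a.1 /\ word_on Y x.
Proof.
rewrite -cats1 word_on_cat word_on_cons.
split; [by move=> [? [? ?]]|by move=> [? ?]; split => //; split => // l].
Qed.

Lemma pal_um n u mid : size u < n -> word_on Y u -> word_on Y mid -> size mid <= 1 ->
  palindrome Y (word_val (u ++ mid ++ rev u)).
Proof.
elim: n u mid => // n IH u mid Hs Hu Hm Hmid.
have Hru : word_on Y (rev u) by apply/word_on_rev.
case: (boolP (sorted rr u)) => Hr; last first.
  have [x [a [b [y [E Hab]]]]] := not_sorted_split Hr.
  have Hs' : size (x ++ y) < n.
    by move: Hs; rewrite E !size_cat /= !addnS ltnS => /ltnW.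
  move: Hu; rewrite E => /word_on_cat [Hx] /word_on_cons [_] /word_on_cons [_ Hy].
  have := IH (x ++ y) mid Hs' (proj2 (word_on_cat x y) (conj Hx Hy)) Hm Hmid.
  suff -> : word_val ((x ++ a :: b :: y) ++ mid ++ rev (x ++ a :: b :: y)) =
            word_val ((x ++ y) ++ mid ++ rev (x ++ y)) by [].
  rewrite -catA /= hcancel // !rev_cat !rev_cons -!cats1 -!catA /=.
  have -> : x ++ y ++ mid ++ rev y ++ [:: b, a & rev x] =
            (x ++ y ++ mid ++ rev y) ++ [:: b, a & rev x] by rewrite !catA.
  rewrite hcancel; last by rewrite rrC.
  by rewrite !catA.
case: mid Hm Hmid => [|m [|? ?]] Hm Hmid //.
  exists (u ++ rev u); split.
  - by apply/word_on_cat.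
  - apply: reduced_cat => //; first exact: reduced_rev.
    move=> a b; case/lastP: u Hr {Hs Hu Hru} => [|u' l] //= Hr _ _.
    by rewrite rev_rcons last_rcons /= rr_refl.
  - by rewrite rev_cat revK.
  - by [].
case/lastP: u Hs Hu Hr Hru => [|u' l] Hs Hu Hr Hru.
  exists [:: m]; split => //; by rewrite cats0.
have [Hl Hu'] := proj1 (word_on_rcons _ _) Hu.
case Hlm: (rr l m); last first.
  have Hs' : size u' < n by move: Hs; rewrite size_rcons.
  have := IH u' [:: l] Hs' Hu' (fun l' hl => ltac:(by move: hl; rewrite mem_seq1 => /eqP ->)) isT.
  suff -> : word_val (rcons u' l ++ [:: m] ++ rev (rcons u' l)) =
            word_val (u' ++ [:: l] ++ rev u') by [].
  by rewrite rev_rcons cat_rcons /= hcancel ?Hlm.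
exists (rcons u' l ++ [:: m] ++ rev (rcons u' l)); split => //.
- by apply/word_on_cat; split => //; apply/word_on_cat.
- apply: reduced_cat => //.
    rewrite rev_rcons /=; rewrite rrC Hlm /=.
    by have := reduced_rev Hr; rewrite rev_rcons.
  by move=> a b _ _; rewrite last_rcons.
- by rewrite !rev_cat revK catA.
Qed.

Lemma pal_word w : word_on Y w -> rev w = w -> palindrome Y (word_val w).
Proof.
move=> Hw Hr; have [u [mid [Hm E]]] := pal_decomp (ltnSn (size w)) Hr.
move: Hw; rewrite E => /word_on_cat [Hu] /word_on_cat [Hmi _].
exact: (pal_um (ltnSn (size u))).
Qed.

End Words.

Local Open Scope classical_set_scope.
Set Implicit Arguments.
Unset Strict Implicit.


Section Len.
Variable Gg : groupType.
Local Open Scope ereal_scope.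

Lemma pal_length_le (X : set Gg) (g : Gg) ps :
  (forall p, p \in ps -> palindrome X p) -> prodl ps = g ->
  pal_length X g <= ((size ps)%:R)%:E.
Proof.
move=> Hp Hg; apply: ereal_inf_lbound; exists (size ps) => //.
by exists ps.
Qed.

Lemma pal_length_ge0 (X : set Gg) (g : Gg) : 0 <= pal_length X g.
Proof.
apply: le_ereal_inf_tmp => y [n _ <-]; by rewrite lee_fin ler0n.
Qed.

Lemma pal_length_attained (X : set Gg) (g : Gg) :
  pal_length X g = +oo \/ exists ps, [/\ (forall p, p \in ps -> palindrome X p),
      prodl ps = g & pal_length X g = ((size ps)%:R)%:E].
Proof.
pose P n := exists ps : seq Gg,
        [/\ size ps = n, (forall p, p \in ps -> palindrome X p) & prodl ps = g].
case: (pselect (exists n, P n)) => [exP|nex]; last first.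
  left; apply/eqP; rewrite -leye_eq; apply: le_ereal_inf_tmp => y [n Pn _].
  by case: nex; exists n.
right.
have exP' : exists n, `[< P n >] by case: exP => n Pn; exists n; apply/asboolP.
case: (ex_minnP exP') => m /asboolP [ps [Hs Hp Hg]] Hmin.
exists ps; split => //; apply/eqP; rewrite eq_le; apply/andP; split.
  exact: pal_length_le.
apply: le_ereal_inf_tmp => y [n Pn <-].
rewrite Hs lee_fin ler_nat; apply: Hmin; exact/asboolP.
Qed.

End Len.

Local Open Scope classical_set_scope.
Set Implicit Arguments.
Unset Strict Implicit.

Section Hom.
Variables (G Gbar : groupType) (X : set G) (pi : G -> Gbar).
Hypothesis piM : forall x y : G, pi (x * y)%g = (pi x * pi y)%g.
Local Open Scope group_scope.

Lemma pi1 : pi 1 = 1.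
Proof. by apply: (@mulIg _ (pi 1)); rewrite -piM !mul1g. Qed.

Lemma piV x : pi x^-1 = (pi x)^-1.
Proof. by apply/esym/mulg1_eq; rewrite -piM mulgV pi1. Qed.

Definition mapl (l : letter G) : letter Gbar := (pi l.1, l.2).

Lemma wv_map w : word_val (map mapl w) = pi (word_val w).
Proof.
elim: w => [|[a e] w IH] /=; first by rewrite pi1.
by rewrite IH piM; case: e => //=; rewrite piV.
Qed.

Lemma prodl_map ps : prodl (map pi ps) = pi (prodl ps).
Proof. by elim: ps => [|p ps IH] /=; rewrite ?pi1 // IH piM. Qed.

Lemma pal_image p : palindrome X p -> palindrome (pi @` X) (pi p).
Proof.
case=> w [Hw _ Hr <-]; rewrite -wv_map; apply: pal_word.
  move=> l /mapP [l' Hl' ->]; by exists l'.1 => //; apply: Hw.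
by rewrite -map_rev Hr.
Qed.

Variable f : Gbar -> G.
Hypothesis fK : forall a, pi (f a) = a.
Hypothesis fX : forall a, (pi @` X) a -> X (f a).

Definition liftl (l : letter Gbar) : letter G := (f l.1, l.2).

Lemma wv_lift w : pi (word_val (map liftl w)) = word_val w.
Proof.
rewrite -wv_map -map_comp; congr word_val.
elim: w => [|[a e] w IH] //=.
by rewrite IH /mapl /liftl /= fK.
Qed.

Lemma pal_lift q : palindrome (pi @` X) q -> exists p, palindrome X p /\ pi p = q.
Proof.
case=> w [Hw Hred Hr <-]; exists (word_val (map liftl w)); split; last exact: wv_lift.
exists (map liftl w); split => //.
- by move=> l /mapP [l' Hl' ->]; apply: fX; apply: Hw.
- rewrite /reduced_word sorted_map; apply: sub_sorted Hred => a b /=.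
  apply: contra => /andP [/eqP E ->]; rewrite andbT.
  by apply/eqP; rewrite -(fK a.1) E fK.
- by rewrite -map_rev Hr.
Qed.

Lemma pals_lift qs : (forall q, q \in qs -> palindrome (pi @` X) q) ->
  exists ps, [/\ size ps = size qs, (forall p, p \in ps -> palindrome X p) &
              pi (prodl ps) = prodl qs].
Proof.
elim: qs => [|q qs IH] H; first by exists [::]; split => //; rewrite pi1.
have [ps [Hs Hp He]] := IH (fun q' hq => H q' (ltac:(by rewrite in_cons hq orbT))).
have [p [Hp1 Hp2]] := pal_lift (H q (mem_head _ _)).
exists (p :: ps); split => /=; [by rewrite Hs | | by rewrite piM Hp2 He].
by move=> p'; rewrite in_cons => /orP [/eqP ->|] // /Hp.
Qed.

End Hom.

Local Open Scope classical_set_scope.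
Local Open Scope ereal_scope.

Lemma prodl_cat (Gg : groupType) (s1 s2 : seq Gg) : prodl (s1 ++ s2) = (prodl s1 * prodl s2)%g.
Proof. by elim: s1 => [|x s IH] /=; rewrite ?mul1g // IH mulgA. Qed.

End Helpers.
Import Helpers.

Local Open Scope classical_set_scope.
Local Open Scope ereal_scope.
Import Order.TTheory GRing.Theory Num.Theory.

Theorem lemma2p6 (G Gbar : groupType) (X H : set G) (pi : G -> Gbar) :
  generates X ->
  normal_subgroup H ->
  (forall x y : G, pi (x * y)%g = (pi x * pi y)%g) ->
  (forall z : Gbar, exists g : G, pi g = z) ->
  (forall g : G, pi g = 1%g <-> H g) ->
  pal_width (pi @` X) <= pal_width X /\
  pal_width X <= pal_width (pi @` X) + pal_width_on X H.
Proof.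
move=> _ [H1 _ _] piM surj ker.
have Hex : forall a, exists x, pi x = a /\ ((pi @` X) a -> X x).
  move=> a; case: (pselect ((pi @` X) a)) => [[x Xx <-]|nY]; first by exists x.
  have [g Eg] := surj a; exists g; split => // Hy; case: nY; by rewrite -Eg.
have [f Hf] := boolp.choice Hex.
have fK a := proj1 (Hf a).
have fX a := proj2 (Hf a).
split.
  apply: ge_ereal_sup => _ [z _ <-]; have [g <-] := surj z.
  apply: (@le_trans _ _ (pal_length X g)); last by apply: ereal_sup_ubound; exists g.
  apply: le_ereal_inf_tmp => _ [n [ps [Hs Hp Hg]] <-].
  rewrite -Hs -(size_map pi); apply: pal_length_le; last by rewrite prodl_map // Hg.
  by move=> p /mapP [p' Hp' ->]; apply: pal_image => //; apply: Hp.
apply: ge_ereal_sup => _ [g _ <-].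
have H0 : 0 <= pal_width_on X H.
  apply: (le_trans (pal_length_ge0 X 1%g)); apply: ereal_sup_ubound; by exists 1%g.
have HpiW : pal_length (pi @` X) (pi g) <= pal_width (pi @` X).
  by apply: ereal_sup_ubound; exists (pi g).
have H0' : 0 <= pal_width (pi @` X) := le_trans (pal_length_ge0 _ _) HpiW.
case: (pal_length_attained (pi @` X) (pi g)) => [Hoo|[qs [Hq Hqg Hlen]]].
  move: HpiW; rewrite Hoo leye_eq => /eqP ->.
  rewrite addye ?leey //; move: H0; by case: (pal_width_on X H).
have [ps [Hs Hp He]] := pals_lift piM fK fX Hq.
pose h := ((prodl ps)^-1 * g)%g.
have Hh0 : H h.
  apply/ker; rewrite /h piM piV // He Hqg; exact: mulVg.
have Hh : pal_length X h <= pal_width_on X H by apply: ereal_sup_ubound; exists h.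
case: (pal_length_attained X h) => [Hoo|[rs [Hr Hrh Hlr]]].
  move: Hh; rewrite Hoo leye_eq => /eqP ->.
  rewrite addey ?leey //; move: H0'; by case: (pal_width (pi @` X)).
apply: (@le_trans _ _ (((size (ps ++ rs))%:R)%:E)).
  apply: pal_length_le.
    by move=> p; rewrite mem_cat => /orP [/Hp|/Hr].
  by rewrite prodl_cat Hrh /h mulVKg.
rewrite size_cat natrD EFinD Hs -Hlen -Hlr.
exact: leeD.
Qed.
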